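(* Let $P_0$ be a domain, $U$ a free $P_0$-module of rank four with dual $U^*=\operatorname{Hom}_{P_0}(U,P_0)$, and $x,y,z,w$ a basis of $U$ with dual basis $x^*,y^*,z^*,w^*$. Let $$\phi_3=x^{*(3)}+ax^*z^{*(2)}+dy^*z^{*(2)}+ey^*z^*w^*+fy^*w^{*(2)}+gy^{*(2)}z^*+hy^{*(2)}w^*+iy^{*(3)}+jz^{*(3)}+kz^{*(2)}w^*+lz^*w^{*(2)}+mw^{*(3)}\in D_3U^*$$ with $a,d,e,\dots,m\in P_0$. Assume (a) $a\neq0$ in $P_0$ and (b) $\ell\phi_3\neq0$ for all nonzero $\ell\in U$. Then $\Gamma_{\phi_3}$ is not identically zero.
   Context: $D_iU^*=\operatorname{Hom}_{P_0}(\operatorname{Sym}_iU,P_0)$; $D_\bullet U^*$ is the divided power algebra, a module over $\operatorname{Sym}_\bullet U$ via $(uv)(u')=v(uu')$. The divided power monomial $x^{*(a_1)}y^{*(a_2)}z^{*(a_3)}w^{*(a_4)}$ takes value $1$ on $x^{a_1}y^{a_2}z^{a_3}w^{a_4}$ and $0$ on all other monomials of that degree; a factor without parenthesized exponent has exponent one. $D_4U$ is the degree-$4$ divided power of $U$. For $X\in D_4U$, $\Delta(X)\in U^{\otimes4}$ is its comultiplication: for $X=\ell_1^{(e_1)}\cdots\ell_s^{(e_s)}$ with $\sum e_j=4$, $\Delta(X)$ is the sum of all distinct words $u_1\otimes\cdots\otimes u_4$ in which the symbol $\ell_j$ occurs exactly $e_j$ times, extended linearly. $\Gamma_{\phi_3}:D_4U\otimes\bigwedge^4U\to\bigwedge^4U^*$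 is the $P_0$-linear map $\Gamma_{\phi_3}(X\otimes y_1\wedge\cdots\wedge y_4)=\sum(u_1y_1\phi_3)\wedge\cdots\wedge(u_4y_4\phi_3)$, summed over the terms of $\Delta(X)$. *)

(* Defs.v *)
From HB Require Import structures.
From mathcomp Require Import all_boot all_order all_algebra.
Set Implicit Arguments. Unset Strict Implicit. Unset Printing Implicit Defensive.
Import Order.TTheory GRing.Theory Num.Theory.
Local Open Scope ring_scope.

(* U = free P0-module of rank 4, realised as 'rV[R]_4 with standard basis
   b 0 = x, b 1 = y, b 2 = z, b 3 = w. *)
Definition bas (R : idomainType) (i : 'I_4) : 'rV[R]_4 := delta_mx 0 i.

(* An element of D_n U^* = Hom(Sym_n U, P0) is given by its values on the
   monomials of Sym_n U, indexed by exponent vectors ('I_4 -> nat). *)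
Definition cubic (R : idomainType) := ('I_4 -> nat) -> R.

Definition expo3 (i j k : 'I_4) : 'I_4 -> nat :=
  fun l => ((i == l) + (j == l) + (k == l))%N.

Definition phi3 (R : idomainType) (a d e f g h i j k l m : R) : cubic R :=
  fun n =>
  match (n ord0 : nat), (n (inord 1) : nat), (n (inord 2) : nat), (n (inord 3) : nat) with
  | 3%N, 0%N, 0%N, 0%N => 1
  | 1%N, 0%N, 2%N, 0%N => a
  | 0%N, 1%N, 2%N, 0%N => d
  | 0%N, 1%N, 1%N, 1%N => e
  | 0%N, 1%N, 0%N, 2%N => f
  | 0%N, 2%N, 1%N, 0%N => g
  | 0%N, 2%N, 0%N, 1%N => h
  | 0%N, 3%N, 0%N, 0%N => i
  | 0%N, 0%N, 3%N, 0%N => j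
  | 0%N, 0%N, 2%N, 1%N => k
  | 0%N, 0%N, 1%N, 2%N => l
  | 0%N, 0%N, 0%N, 3%N => m
  | _, _, _, _ => 0
  end.

(* phi (u v w) for u v w in U, i.e. phi evaluated on the product u v w in Sym_3 U *)
Definition evalc (R : idomainType) (phi : cubic R) (u v w : 'rV[R]_4) : R :=
  \sum_(i < 4) \sum_(j < 4) \sum_(k < 4)
     u 0 i * v 0 j * w 0 k * phi (expo3 i j k).

(* l phi in D_2 U^*, given by its values (l phi)(b_j b_k) = phi(l b_j b_k) *)
Definition contr1 (R : idomainType) (phi : cubic R) (l : 'rV[R]_4) : 'M[R]_4 :=
  \matrix_(j, k) evalc phi l (bas R j) (bas R k).

(* u v phi in U^*, given by its coordinates in the dual basis:
   (u v phi)(b_k) = phi(u v b_k) *)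
Definition contr2 (R : idomainType) (phi : cubic R) (u v : 'rV[R]_4) : 'rV[R]_4 :=
  \row_k evalc phi u v (bas R k).

(* D_4 U: free with basis the divided power monomials
   x^{(n0)} y^{(n1)} z^{(n2)} w^{(n3)}, n0+n1+n2+n3 = 4, indexed by
   exponent vectors n : {ffun 'I_4 -> 'I_5}.  An element X of D_4 U is a
   coefficient function on these (coefficients at exponent vectors of total
   degree <> 4 are ignored). *)
Definition expvec := {ffun 'I_4 -> 'I_5}.
Definition deg4 (n : expvec) : bool := (\sum_(l < 4) (n l : nat) == 4)%N.
Definition D4 (R : idomainType) := {ffun expvec -> R}.

(* Delta of a divided power monomial: the words u_1 (x) ... (x) u_4 of basis
   vectors in which b_l occurs exactly n l times. A word is w : 'I_4 -> 'I_4,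
   position r carrying the letter bas (w r). *)
Definition word_of (n : expvec) (w : {ffun 'I_4 -> 'I_4}) : bool :=
  [forall l : 'I_4, #|[set r : 'I_4 | w r == l]| == n l].

(* Gamma_phi(X (x) y_1 /\ ... /\ y_4), expressed as its coordinate on the
   generator x^* /\ y^* /\ z^* /\ w^* of /\^4 U^*:  the wedge
   v_1 /\ ... /\ v_4 of covectors equals det[v_r(b_c)] x^*/\y^*/\z^*/\w^*. *)
Definition Gamma (R : idomainType) (phi : cubic R) (X : D4 R)
  (y : 'I_4 -> 'rV[R]_4) : R :=
  \sum_(n : expvec | deg4 n) X n *
    \sum_(w : {ffun 'I_4 -> 'I_4} | word_of n w)
       \det (\matrix_(r < 4, c < 4) contr2 phi (bas R (w r)) (y r) 0 c).

(* Main.v *)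
Require Import Defs.
From HB Require Import structures.
From mathcomp Require Import all_boot all_order all_algebra.
From mathcomp Require Import ring.
Import GRing.Theory.
Local Open Scope ring_scope.

Definition o0 : 'I_4 := @Ordinal 4 0 isT.
Definition o1 : 'I_4 := @Ordinal 4 1 isT.
Definition o2 : 'I_4 := @Ordinal 4 2 isT.
Definition o3 : 'I_4 := @Ordinal 4 3 isT.

Definition code (w : {ffun 'I_4 -> 'I_4}) : seq nat :=
  [:: val (w o0); val (w o1); val (w o2); val (w o3)].

Lemma nth_code (w : {ffun 'I_4 -> 'I_4}) (r : 'I_4) : nth 0%N (code w) r = w r.
Proof.
case: r => [[|[|[|[|r]]]] Hr] //=; rewrite /code /=;
  by congr (nat_of_ord (w _)); apply/val_inj.
Qed.

Lemma big4 (T : Type) (idx : T) (op : Monoid.law idx) (F : 'I_4 -> T) :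
  \big[op/idx]_(i < 4) F i = op (op (op (F o0) (F o1)) (F o2)) (F o3).
Proof.
rewrite !big_ord_recr big_ord0 /= Monoid.mul1m.
by congr (op (op (op (F _) (F _)) (F _)) (F _)); apply/val_inj.
Qed.

Lemma card_code (w : {ffun 'I_4 -> 'I_4}) (l : 'I_4) : #|[set r | w r == l]| = count_mem (val l) (code w).
Proof.
rewrite -sum1_card big_mkcond big4 /= !inE.
rewrite /code /=.
by rewrite addn0 !addnA.
Qed.

Definition i4 := iota 0 4.
Definition allc : seq (seq nat) :=
  flatten [seq flatten [seq flatten [seq [seq [:: x0; x1; x2; x3] | x3 <- i4] | x2 <- i4] | x1 <- i4] | x0 <- i4].

Lemma mem_allc (x0 x1 x2 x3 : nat) : (x0 < 4)%N -> (x1 < 4)%N -> (x2 < 4)%N -> (x3 < 4)%N ->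
  [:: x0; x1; x2; x3] \in allc.
Proof.
by case: x0 => [|[|[|[|?]]]] //; case: x1 => [|[|[|[|?]]]] //;
   case: x2 => [|[|[|[|?]]]] //; case: x3 => [|[|[|[|?]]]].
Qed.

Lemma sum_ffun (V : nmodType) (F : seq nat -> V) :
  \sum_(w : {ffun 'I_4 -> 'I_4}) F (code w) = \sum_(c <- allc) F c.
Proof.
rewrite -(big_map code predT F); apply: perm_big; apply: uniq_perm.
- rewrite map_inj_uniq ?index_enum_uniq // => w1 w2 E.
  apply/ffunP => r; move: (nth_code w1 r) (nth_code w2 r).
  by rewrite E => -> /val_inj ->.
- by [].
move=> c; apply/mapP/idP => [[w _ ->] | Hc].
  by rewrite /code mem_allc ?ltn_ord.
have : all (fun c => (size c == 4) && all (fun x => x < 4) c)%N allc by [].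
move/allP/(_ c Hc).
case: c Hc => [|x0 [|x1 [|x2 [|x3 [|? ?]]]]] //= _ /and4P [H0 H1 H2 /andP [H3 _]].
exists [ffun r : 'I_4 => inord (nth 0%N [:: x0; x1; x2; x3] r)] => //.
  by rewrite mem_index_enum.
by rewrite /code !ffunE /= !inordK.
Qed.


Lemma sq0 (R : idomainType) (x : R) : x ^+ 2 = 0 -> x = 0.
Proof. by move/eqP; rewrite expf_eq0 /= => /eqP. Qed.

Lemma mul0P (R : idomainType) (x y : R) : x * y = 0 -> x = 0 \/ y = 0.
Proof. by move/eqP; rewrite mulf_eq0 => /orP [] /eqP; [left|right]. Qed.

Ltac byneg E := match type of E with ?Y = 0 => transitivity (- Y); [ring | rewrite E oppr0] end.
Ltac bypos E := match type of E with ?Y = 0 => transitivity Y; [ring | exact E] end.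

Lemma exists_ell (R : idomainType) (d e f g h i j k l m : R) :
  f * i - h ^+ 2 = 0 -> i * m - f * h = 0 -> h * m - f ^+ 2 = 0 -> g * l - e ^+ 2 = 0 ->
  g * m - 2 * e * f + h * l = 0 -> i * l - 2 * e * h + f * g = 0 ->
  g * j * m - g * k * l - d ^+ 2 * m + 2 * d * f * k - 2 * e * f * j + h * j * l - h * k ^+ 2 + e ^+ 2 * k = 0 ->
  i * j * l - i * k ^+ 2 - d * g * l + 2 * d * h * k - 2 * e * h * j + f * g * j - d ^+ 2 * f + d * e ^+ 2 = 0 ->
  g * j * l - g * k ^+ 2 - d ^+ 2 * l + 2 * d * e * k - e ^+ 2 * j = 0 ->
  exists b c : R, [/\ (b != 0) || (c != 0), b * i + c * h = 0, b * h + c * f = 0,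
     b * f + c * m = 0 & [/\ b * g + c * e = 0, b * e + c * l = 0 & b * d + c * k = 0]].
Proof.
move=> E1 E2 E3 E4 E5 E6 N1 N2 N3.
have [Hf|Hf] := eqVneq f 0; last first.
  have F1 : f * e - h * l = 0.
    apply: sq0; rewrite (_ : (f * e - h * l) ^+ 2 =
      - f ^+ 2 * (g * l - e ^+ 2) + l * f * (i * l - 2 * e * h + f * g) - l ^+ 2 * (f * i - h ^+ 2)); last by ring.
    by rewrite E4 E6 E1; ring.
  have F2 : f * g - e * h = 0.
    have : f * (f * g - e * h) = 0.
      rewrite (_ : f * (f * g - e * h) = f * (i * l - 2 * e * h + f * g) - l * (f * i - h ^+ 2) + h * (f * e - h * l)); last by ring.
      by rewrite E6 E1 F1; ring.
    by case/mul0P => // /eqP; rewrite (negbTE Hf).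
  have F3 : f * d - h * k = 0.
    apply: sq0; rewrite (_ : (f * d - h * k) ^+ 2 =
      h * (j * (g * m - 2 * e * f + h * l) - k * (g * l - e ^+ 2) -
       (g * j * m - g * k * l - d ^+ 2 * m + 2 * d * f * k - 2 * e * f * j + h * j * l - h * k ^+ 2 + e ^+ 2 * k))
      - d ^+ 2 * (h * m - f ^+ 2)); last by ring.
    by rewrite E5 E4 N1 E3; ring.
  exists f, (- h); split; rewrite ?Hf //.
  - by bypos E1.
  - by ring.
  - by byneg E3.
  split.
  - by bypos F2.
  - by bypos F1.
  - by bypos F3.
subst f.
have Hh : h = 0 by apply: sq0; byneg E1.
subst h.
have [Hi|Hi] := eqVneq i 0; last first.
  have Hm : m = 0.
    by move: E2; rewrite ?(mul0r, mulr0, subr0, addr0) => /mul0P [] // /eqP; rewrite (negbTE Hi).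
  have Hl : l = 0.
    by move: E6; rewrite ?(mul0r, mulr0, subr0, addr0) => /mul0P [] // /eqP; rewrite (negbTE Hi).
  subst m l.
  have He : e = 0 by apply: sq0; byneg E4.
  subst e.
  have Hk : k = 0.
    have N2' : i * k ^+ 2 = 0 by byneg N2.
    by apply: sq0; case/mul0P: N2' => // /eqP; rewrite (negbTE Hi).
  subst k.
  exists 0, 1; split; rewrite ?oner_eq0 ?orbT //; try ring.
  by split; ring.
subst i.
have [Hm|Hm] := eqVneq m 0; last first.
  have Hg : g = 0.
    by move: E5; rewrite ?(mul0r, mulr0, subr0, addr0) => /mul0P [] // /eqP; rewrite (negbTE Hm).
  subst g.
  have He : e = 0 by apply: sq0; byneg E4.
  subst e.
  have Hd : d = 0.
    have N1' : d ^+ 2 * m = 0 by byneg N1.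
    by apply: sq0; case/mul0P: N1' => // /eqP; rewrite (negbTE Hm).
  subst d.
  exists 1, 0; split; rewrite ?oner_eq0 //; try ring.
  by split; ring.
subst m.
have [Hg|Hg] := eqVneq g 0; last first.
  have F : g * k - e * d = 0.
    apply: sq0; rewrite (_ : (g * k - e * d) ^+ 2 =
       g * (j * (g * l - e ^+ 2) - (g * j * l - g * k ^+ 2 - d ^+ 2 * l + 2 * d * e * k - e ^+ 2 * j))
       - d ^+ 2 * (g * l - e ^+ 2)); last by ring.
    by rewrite E4 N3; ring.
  exists e, (- g); split; rewrite ?oppr_eq0 ?Hg ?orbT //; try ring.
  split; try ring.
  - by byneg E4.
  - by byneg F.
subst g.
have He : e = 0 by apply: sq0; byneg E4.
subst e.
have [Hd|Hd] := eqVneq d 0.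
  subst d.
  exists 1, 0; split; rewrite ?oner_eq0 //; try ring.
  by split; ring.
have Hl : l = 0.
  have N3' : d ^+ 2 * l = 0 by byneg N3.
  by case/mul0P: N3' => // /sq0 /eqP; rewrite (negbTE Hd).
subst l.
exists k, (- d); split; rewrite ?oppr_eq0 ?Hd ?orbT //; try ring.
by split; ring.
Qed.

Section Main.
Variable R : idomainType.

Definition d3 (F : nat -> nat -> R) : R :=
  F 0%N 0%N * (F 1%N 1%N * F 2%N 2%N - F 1%N 2%N * F 2%N 1%N)
  - F 0%N 1%N * (F 1%N 0%N * F 2%N 2%N - F 1%N 2%N * F 2%N 0%N)
  + F 0%N 2%N * (F 1%N 0%N * F 2%N 1%N - F 1%N 1%N * F 2%N 0%N).

Lemma det2n (F : nat -> nat -> R) :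
  \det (\matrix_(i < 2, j < 2) F i j) = F 0%N 0%N * F 1%N 1%N - F 0%N 1%N * F 1%N 0%N.
Proof.
rewrite (expand_det_row _ ord0) !big_ord_recr big_ord0 /cofactor !det_mx11 !mxE /=.
rewrite ?mxE /=. ring.
Qed.

Lemma det3n (F : nat -> nat -> R) : \det (\matrix_(i < 3, j < 3) F i j) = d3 F.
Proof.
rewrite (expand_det_row _ ord0) !big_ord_recr big_ord0 /cofactor /=.
have E : forall j : 'I_3, row' ord0 (col' j (\matrix_(i < 3, j < 3) F i j)) =
   \matrix_(i < 2, k < 2) F (bump 0 i) (bump j k).
  by move=> j; apply/matrixP => p q; rewrite !mxE.
rewrite !E. rewrite !(det2n (fun p q => F (bump 0 p) (bump _ q))) ?mxE /= /d3. ring.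
Qed.

Lemma det4n (F : nat -> nat -> R) :
  \det (\matrix_(i < 4, j < 4) F i j) =
  F 0%N 0%N * d3 (fun p q => F (bump 0 p) (bump 0 q))
  - F 0%N 1%N * d3 (fun p q => F (bump 0 p) (bump 1 q))
  + F 0%N 2%N * d3 (fun p q => F (bump 0 p) (bump 2 q))
  - F 0%N 3%N * d3 (fun p q => F (bump 0 p) (bump 3 q)).
Proof.
rewrite (expand_det_row _ ord0) !big_ord_recr big_ord0 /cofactor /=.
have E : forall j : 'I_4, row' ord0 (col' j (\matrix_(i < 4, j < 4) F i j)) =
   \matrix_(i < 3, k < 3) F (bump 0 i) (bump j k).
  by move=> j; apply/matrixP => p q; rewrite !mxE.
rewrite !E !(det3n (fun p q => F (bump 0 p) (bump _ q))) ?mxE /=. ring.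
Qed.

Variables (a d e f g h i j k l m : R).

Definition tab (n0 n1 n2 n3 : nat) : R :=
  match n0, n1, n2, n3 with
  | 3%N, 0%N, 0%N, 0%N => 1
  | 1%N, 0%N, 2%N, 0%N => a
  | 0%N, 1%N, 2%N, 0%N => d
  | 0%N, 1%N, 1%N, 1%N => e
  | 0%N, 1%N, 0%N, 2%N => f
  | 0%N, 2%N, 1%N, 0%N => g
  | 0%N, 2%N, 0%N, 1%N => h
  | 0%N, 3%N, 0%N, 0%N => i
  | 0%N, 0%N, 3%N, 0%N => j
  | 0%N, 0%N, 2%N, 1%N => k
  | 0%N, 0%N, 1%N, 2%N => l
  | 0%N, 0%N, 0%N, 3%N => m
  | _, _, _, _ => 0
  end.

Definition cnt (p q r x : nat) : nat := ((p == x) + (q == x) + (r == x))%N.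
Definition ph (p q r : nat) : R := tab (cnt p q r 0) (cnt p q r 1) (cnt p q r 2) (cnt p q r 3).
Let phi := phi3 a d e f g h i j k l m.

Lemma phi3E (p q r : 'I_4) : phi (expo3 p q r) = ph p q r.
Proof.
have I1 : (inord 1 : 'I_4) = o1 by apply/val_inj; rewrite /= inordK.
have I2 : (inord 2 : 'I_4) = o2 by apply/val_inj; rewrite /= inordK.
have I3 : (inord 3 : 'I_4) = o3 by apply/val_inj; rewrite /= inordK.
by rewrite /phi /phi3 I1 I2 I3.
Qed.

Lemma evalc_l (psi : cubic R) (u : 'rV[R]_4) (q r : 'I_4) :
  evalc psi u (bas R q) (bas R r) = \sum_(p < 4) u 0 p * psi (expo3 p q r).
Proof.
rewrite /evalc; apply: eq_bigr => p _.
rewrite (bigD1 q) //= [X in _ + X]big1 => [|q' Hq']; last first.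
  by apply: big1 => r' _; rewrite /bas !mxE (negbTE Hq') /= mulr0 !mul0r.
rewrite addr0 (bigD1 r) //= [X in _ + X]big1 => [|r' Hr']; last first.
  by rewrite /bas !mxE (negbTE Hr') /= mulr0 !mul0r.
by rewrite /bas !mxE !eqxx /= !mulr1 !addr0.
Qed.

Lemma evalc_bas (psi : cubic R) (p q r : 'I_4) :
  evalc psi (bas R p) (bas R q) (bas R r) = psi (expo3 p q r).
Proof.
rewrite evalc_l (bigD1 p) //= [X in _ + X]big1 => [|p' Hp']; last first.
  by rewrite /bas !mxE (negbTE Hp') /= mul0r.
by rewrite /bas !mxE !eqxx /= mul1r addr0.
Qed.

Definition nvec (s : seq nat) : expvec := [ffun x : 'I_4 => inord (nth 0%N s x)].
Definition Xv (s : seq nat) : D4 R := [ffun n => (n == nvec s)%:R].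
Definition Pw (s c : seq nat) : bool :=
  all (fun x => count_mem x c == nth 0%N s x) (iota 0 4).
Definition Dn (c : seq nat) : R := \det (\matrix_(r < 4, c' < 4) ph (nth 0%N c r) r c').

Lemma word_ofE (s : seq nat) (w : {ffun 'I_4 -> 'I_4}) :
  all (fun x => x < 5)%N s -> word_of (nvec s) w = Pw s (code w).
Proof.
move=> Hs.
have H5 : forall x, (nth 0%N s x < 5)%N.
  move=> x; case: (ltnP x (size s)) => Hx; first exact: (allP Hs) _ (mem_nth 0%N Hx).
  by rewrite nth_default.
rewrite /word_of /Pw; apply/forallP/allP => [H x | H x].
  rewrite mem_iota => /andP [_ Hx].
  by have := H (Ordinal Hx); rewrite card_code ffunE inordK.
have := H (val x); rewrite mem_iota ltn_ord => /(_ isT).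
by rewrite card_code ffunE inordK.
Qed.

Lemma coefE (s : seq nat) : all (fun x => x < 5)%N s -> deg4 (nvec s) ->
  Gamma phi (Xv s) (bas R) = \sum_(c <- filter (Pw s) allc) Dn c.
Proof.
move=> Hs Hd.
rewrite /Gamma.
rewrite (eq_bigr (fun n => if n == nvec s then
      \sum_(w | word_of n w) \det (\matrix_(r < 4, c < 4) contr2 phi (bas R (w r)) (bas R r) 0 c)
      else 0)) => [|n _]; last by rewrite ffunE; case: (n == nvec s); rewrite ?mul1r ?mul0r.
rewrite -big_mkcondr (big_pred1 (nvec s)) => [|n]; last first.
  by rewrite /=; case: eqP => [->|]; rewrite ?Hd ?andbF.
rewrite big_filter.
rewrite (eq_bigl (fun w => Pw s (code w))) => [|w]; last by rewrite word_ofE.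
rewrite big_mkcond.
rewrite (eq_bigr (fun w => if Pw s (code w) then Dn (code w) else 0)) => [|w _]; last first.
  case: ifP => // _; rewrite /Dn; congr (\det _); apply/matrixP => r c.
  by rewrite !mxE evalc_bas phi3E nth_code.
by rewrite (sum_ffun _ (fun c => if Pw s c then Dn c else 0)) -big_mkcond.
Qed.

Lemma c2200 : Gamma phi (Xv [:: 2; 2; 0; 0]%N) (bas R) = a * f * i - a * h ^+ 2.
Proof.
rewrite coefE //; last by rewrite /deg4 big4 !ffunE /= !inordK.
rewrite (_ : filter _ _ = [:: [:: 0; 0; 1; 1]; [:: 0; 1; 0; 1]; [:: 0; 1; 1; 0]; [:: 1; 0; 0; 1]; [:: 1; 0; 1; 0]; [:: 1; 1; 0; 0]]%N); last by vm_compute.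
rewrite !big_cons big_nil /Dn !(det4n (fun p q => ph (nth 0%N _ p) p q)).
rewrite /d3 /ph /tab /cnt /=.
ring.
Qed.

Lemma c2101 : Gamma phi (Xv [:: 2; 1; 0; 1]%N) (bas R) = a * i * m - a * f * h.
Proof.
rewrite coefE //; last by rewrite /deg4 big4 !ffunE /= !inordK.
rewrite (_ : filter _ _ = [:: [:: 0; 0; 1; 3]; [:: 0; 0; 3; 1]; [:: 0; 1; 0; 3]; [:: 0; 1; 3; 0]; [:: 0; 3; 0; 1]; [:: 0; 3; 1; 0]; [:: 1; 0; 0; 3]; [:: 1; 0; 3; 0]; [:: 1; 3; 0; 0]; [:: 3; 0; 0; 1]; [:: 3; 0; 1; 0]; [:: 3; 1; 0; 0]]%N); last by vm_compute.
rewrite !big_cons big_nil /Dn !(det4n (fun p q => ph (nth 0%N _ p) p q)).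
rewrite /d3 /ph /tab /cnt /=.
ring.
Qed.

Lemma c2002 : Gamma phi (Xv [:: 2; 0; 0; 2]%N) (bas R) = a * h * m - a * f ^+ 2.
Proof.
rewrite coefE //; last by rewrite /deg4 big4 !ffunE /= !inordK.
rewrite (_ : filter _ _ = [:: [:: 0; 0; 3; 3]; [:: 0; 3; 0; 3]; [:: 0; 3; 3; 0]; [:: 3; 0; 0; 3]; [:: 3; 0; 3; 0]; [:: 3; 3; 0; 0]]%N); last by vm_compute.
rewrite !big_cons big_nil /Dn !(det4n (fun p q => ph (nth 0%N _ p) p q)).
rewrite /d3 /ph /tab /cnt /=.
ring.
Qed.

Lemma c2020 : Gamma phi (Xv [:: 2; 0; 2; 0]%N) (bas R) = a * g * l - a * e ^+ 2.
Proof.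
rewrite coefE //; last by rewrite /deg4 big4 !ffunE /= !inordK.
rewrite (_ : filter _ _ = [:: [:: 0; 0; 2; 2]; [:: 0; 2; 0; 2]; [:: 0; 2; 2; 0]; [:: 2; 0; 0; 2]; [:: 2; 0; 2; 0]; [:: 2; 2; 0; 0]]%N); last by vm_compute.
rewrite !big_cons big_nil /Dn !(det4n (fun p q => ph (nth 0%N _ p) p q)).
rewrite /d3 /ph /tab /cnt /=.
ring.
Qed.

Lemma c2011 : Gamma phi (Xv [:: 2; 0; 1; 1]%N) (bas R) = a * g * m - 2 * a * e * f + a * h * l.
Proof.
rewrite coefE //; last by rewrite /deg4 big4 !ffunE /= !inordK.
rewrite (_ : filter _ _ = [:: [:: 0; 0; 2; 3]; [:: 0; 0; 3; 2]; [:: 0; 2; 0; 3]; [:: 0; 2; 3; 0]; [:: 0; 3; 0; 2]; [:: 0; 3; 2; 0]; [:: 2; 0; 0; 3]; [:: 2; 0; 3; 0]; [:: 2; 3; 0; 0]; [:: 3; 0; 0; 2]; [:: 3; 0; 2; 0]; [:: 3; 2; 0; 0]]%N); last by vm_compute.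
rewrite !big_cons big_nil /Dn !(det4n (fun p q => ph (nth 0%N _ p) p q)).
rewrite /d3 /ph /tab /cnt /=.
ring.
Qed.

Lemma c2110 : Gamma phi (Xv [:: 2; 1; 1; 0]%N) (bas R) = a * i * l - 2 * a * e * h + a * f * g.
Proof.
rewrite coefE //; last by rewrite /deg4 big4 !ffunE /= !inordK.
rewrite (_ : filter _ _ = [:: [:: 0; 0; 1; 2]; [:: 0; 0; 2; 1]; [:: 0; 1; 0; 2]; [:: 0; 1; 2; 0]; [:: 0; 2; 0; 1]; [:: 0; 2; 1; 0]; [:: 1; 0; 0; 2]; [:: 1; 0; 2; 0]; [:: 1; 2; 0; 0]; [:: 2; 0; 0; 1]; [:: 2; 0; 1; 0]; [:: 2; 1; 0; 0]]%N); last by vm_compute.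
rewrite !big_cons big_nil /Dn !(det4n (fun p q => ph (nth 0%N _ p) p q)).
rewrite /d3 /ph /tab /cnt /=.
ring.
Qed.

Lemma c1021 : Gamma phi (Xv [:: 1; 0; 2; 1]%N) (bas R) = g * j * m - g * k * l - d ^+ 2 * m + 2 * d * f * k - 2 * e * f * j + h * j * l - h * k ^+ 2 + e ^+ 2 * k.
Proof.
rewrite coefE //; last by rewrite /deg4 big4 !ffunE /= !inordK.
rewrite (_ : filter _ _ = [:: [:: 0; 2; 2; 3]; [:: 0; 2; 3; 2]; [:: 0; 3; 2; 2]; [:: 2; 0; 2; 3]; [:: 2; 0; 3; 2]; [:: 2; 2; 0; 3]; [:: 2; 2; 3; 0]; [:: 2; 3; 0; 2]; [:: 2; 3; 2; 0]; [:: 3; 0; 2; 2]; [:: 3; 2; 0; 2]; [:: 3; 2; 2; 0]]%N); last by vm_compute.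
rewrite !big_cons big_nil /Dn !(det4n (fun p q => ph (nth 0%N _ p) p q)).
rewrite /d3 /ph /tab /cnt /=.
ring.
Qed.

Lemma c1120 : Gamma phi (Xv [:: 1; 1; 2; 0]%N) (bas R) = i * j * l - i * k ^+ 2 - d * g * l + 2 * d * h * k - 2 * e * h * j + f * g * j - d ^+ 2 * f + d * e ^+ 2.
Proof.
rewrite coefE //; last by rewrite /deg4 big4 !ffunE /= !inordK.
rewrite (_ : filter _ _ = [:: [:: 0; 1; 2; 2]; [:: 0; 2; 1; 2]; [:: 0; 2; 2; 1]; [:: 1; 0; 2; 2]; [:: 1; 2; 0; 2]; [:: 1; 2; 2; 0]; [:: 2; 0; 1; 2]; [:: 2; 0; 2; 1]; [:: 2; 1; 0; 2]; [:: 2; 1; 2; 0]; [:: 2; 2; 0; 1]; [:: 2; 2; 1; 0]]%N); last by vm_compute.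
rewrite !big_cons big_nil /Dn !(det4n (fun p q => ph (nth 0%N _ p) p q)).
rewrite /d3 /ph /tab /cnt /=.
ring.
Qed.

Lemma c1030 : Gamma phi (Xv [:: 1; 0; 3; 0]%N) (bas R) = g * j * l - g * k ^+ 2 - d ^+ 2 * l + 2 * d * e * k - e ^+ 2 * j.
Proof.
rewrite coefE //; last by rewrite /deg4 big4 !ffunE /= !inordK.
rewrite (_ : filter _ _ = [:: [:: 0; 2; 2; 2]; [:: 2; 0; 2; 2]; [:: 2; 2; 0; 2]; [:: 2; 2; 2; 0]]%N); last by vm_compute.
rewrite !big_cons big_nil /Dn !(det4n (fun p q => ph (nth 0%N _ p) p q)).
rewrite /d3 /ph /tab /cnt /=.
ring.
Qed.

Definition ellv (b c : R) : 'rV[R]_4 := \row_(x < 4) [:: 0; b; 0; c]`_x.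

Lemma contr1_zero (b c : R) : b * i + c * h = 0 -> b * h + c * f = 0 -> b * f + c * m = 0 ->
  b * g + c * e = 0 -> b * e + c * l = 0 -> b * d + c * k = 0 -> contr1 phi (ellv b c) = 0.
Proof.
move=> H1 H2 H3 H4 H5 H6; apply/matrixP => p q; rewrite !mxE evalc_l big4 !mxE !phi3E /=.
case: p => [[|[|[|[|?]]]] Hp] //; case: q => [[|[|[|[|?]]]] Hq] //; rewrite /ph /tab /cnt /=;
 first [ ring | bypos H1 | bypos H2 | bypos H3 | bypos H4 | bypos H5 | bypos H6 ].
Qed.

End Main.

Lemma cancel_a (R : idomainType) (a x y : R) : a != 0 -> y = a * x -> y = 0 -> x = 0.
Proof. by move=> Ha -> /mul0P [] // /eqP; rewrite (negbTE Ha). Qed.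

Arguments cancel_a {R a x y}.
Arguments exists_ell {R d e f g h i j k l m}.
Arguments ellv {R}.
Arguments contr1_zero {R a d e f g h i j k l m b c}.
Arguments Xv {R}.

Theorem proposition5p1 (R : idomainType) (a d e f g h i j k l m : R) :
  a != 0 ->
  (forall ell : 'rV[R]_4, ell != 0 ->
     contr1 (phi3 a d e f g h i j k l m) ell != 0) ->
  exists (X : D4 R) (y : 'I_4 -> 'rV[R]_4),
    Gamma (phi3 a d e f g h i j k l m) X y != 0.
Proof.
move=> Ha Hb.
have [H2200|H2200] := eqVneq (Gamma (phi3 a d e f g h i j k l m) (Xv [:: 2; 2; 0; 0]%N) (bas R)) 0;
  last by exists (Xv [:: 2; 2; 0; 0]%N), (bas R).
rewrite c2200 in H2200.
have [H2101|H2101] := eqVneq (Gamma (phi3 a d e f g h i j k l m) (Xv [:: 2; 1; 0; 1]%N) (bas R)) 0;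
  last by exists (Xv [:: 2; 1; 0; 1]%N), (bas R).
rewrite c2101 in H2101.
have [H2002|H2002] := eqVneq (Gamma (phi3 a d e f g h i j k l m) (Xv [:: 2; 0; 0; 2]%N) (bas R)) 0;
  last by exists (Xv [:: 2; 0; 0; 2]%N), (bas R).
rewrite c2002 in H2002.
have [H2020|H2020] := eqVneq (Gamma (phi3 a d e f g h i j k l m) (Xv [:: 2; 0; 2; 0]%N) (bas R)) 0;
  last by exists (Xv [:: 2; 0; 2; 0]%N), (bas R).
rewrite c2020 in H2020.
have [H2011|H2011] := eqVneq (Gamma (phi3 a d e f g h i j k l m) (Xv [:: 2; 0; 1; 1]%N) (bas R)) 0;
  last by exists (Xv [:: 2; 0; 1; 1]%N), (bas R).
rewrite c2011 in H2011.
have [H2110|H2110] := eqVneq (Gamma (phi3 a d e f g h i j k l m) (Xv [:: 2; 1; 1; 0]%N) (bas R)) 0;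
  last by exists (Xv [:: 2; 1; 1; 0]%N), (bas R).
rewrite c2110 in H2110.
have [H1021|H1021] := eqVneq (Gamma (phi3 a d e f g h i j k l m) (Xv [:: 1; 0; 2; 1]%N) (bas R)) 0;
  last by exists (Xv [:: 1; 0; 2; 1]%N), (bas R).
rewrite c1021 in H1021.
have [H1120|H1120] := eqVneq (Gamma (phi3 a d e f g h i j k l m) (Xv [:: 1; 1; 2; 0]%N) (bas R)) 0;
  last by exists (Xv [:: 1; 1; 2; 0]%N), (bas R).
rewrite c1120 in H1120.
have [H1030|H1030] := eqVneq (Gamma (phi3 a d e f g h i j k l m) (Xv [:: 1; 0; 3; 0]%N) (bas R)) 0;
  last by exists (Xv [:: 1; 0; 3; 0]%N), (bas R).
rewrite c1030 in H1030.
have E1 : f * i - h ^+ 2 = 0 by apply: (cancel_a Ha _ H2200); ring.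
have E2 : i * m - f * h = 0 by apply: (cancel_a Ha _ H2101); ring.
have E3 : h * m - f ^+ 2 = 0 by apply: (cancel_a Ha _ H2002); ring.
have E4 : g * l - e ^+ 2 = 0 by apply: (cancel_a Ha _ H2020); ring.
have E5 : g * m - 2 * e * f + h * l = 0 by apply: (cancel_a Ha _ H2011); ring.
have E6 : i * l - 2 * e * h + f * g = 0 by apply: (cancel_a Ha _ H2110); ring.
have [b [c [Hbc R1 R2 R3 [R4 R5 R6]]]] := exists_ell E1 E2 E3 E4 E5 E6 H1021 H1120 H1030.
have Hne : ellv b c != 0.
  apply/eqP => /matrixP H; case/orP: Hbc => /eqP []; [move: (H 0 o1) | move: (H 0 o3)];
  by rewrite !mxE.
by move: (Hb _ Hne); rewrite contr1_zero // eqxx.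
Qed.
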